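(* Let $\mathfrak{R}=(G,G',S,\phi,\rho,\delta)$ be a reconciliation and $x,y\in V(G')$ with $x<y$ and $\rho(x)=\rho(y)$. Then $y\in\Delta(\mathfrak{R})$.
   Context: All trees are rooted binary trees whose root node has degree 1; every other non-leaf node $x$ has exactly two children $x_l,x_r$. For nodes of a rooted tree, $y\le x$ means $x$ lies on the path from $y$ to the root; $y<x$ means $y\le x$, $y\ne x$. $G$ is a gene tree, $S$ a species tree, $\phi:L(G)\to L(S)$. A tree $G'$ is an extension of $G$ if $G$ is obtained from $G'$ by pruning some subtrees and suppressing degree-2 nodes. A map $\rho:V(G')\to V(S)$ is consistent with $S$ if $\rho(root(G'))=root(S)$ and every node $x$ of $G'$ with two children satisfies (D) $\rho(x)=\rho(x_l)=\rho(x_r)$ or (S) $\rho(x)_l=\rho(x_l)$ and $\rho(x)_r=\rho(x_r)$. A reconciliation $(G,G',S,\phi,\rho,\delta)$ consists of an extension $G'$ of $G$, a consistent $\rho$ with $\rho|_{L(G)}=\phi$, and an injective partial function $\delta$ from duplications to losses ($L(G')\setminus L(G)$) with $\rho(x)=\rho(\delta(x))$. $\Delta(\mathfrak{R})$ (duplications) is the set of nodes with two children satisfying (D). *)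

(* Defs.v *)
From mathcomp Require Import all_boot.
Set Implicit Arguments. Unset Strict Implicit. Unset Printing Implicit Defensive.

Record rtree := RTree {
  node : finType;
  root : node;
  parent : node -> option node }.
Arguments root : clear implicits.
Arguments parent : clear implicits.

Section Trees.
Variable T : rtree.

Definition children (x : node T) : seq (node T) :=
  [seq y <- enum (node T) | parent T y == Some x].

Definition is_leaf (x : node T) : Prop := children x = [::].

(* y <= x : x lies on the path from y to the root *)
Definition anc_le (y x : node T) : Prop :=
  exists n, iter n (fun o => obind (parent T) o) (Some y) = Some x.

Definition anc_lt (y x : node T) : Prop := anc_le y x /\ y <> x.

Definition is_rbtree : Prop :=
  [/\ parent T (root T) = None,
      (forall x, anc_le x (root T)),
      size (children (root T)) = 1 &
      (forall x, x <> root T -> size (children x) = 0 \/ size (children x) = 2)].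

Definition left_child (x : node T) : node T := nth x (children x) 0.
Definition right_child (x : node T) : node T := nth x (children x) 1.
Definition has_two_children (x : node T) : Prop := size (children x) = 2.

End Trees.

(* Nodes of T' retained when restricting T' to the leaf set X: the leaves in X,
   the root, and the nodes having (at least) two children above some X-leaf. *)
Definition kept (T' : rtree) (X : node T' -> Prop) (v : node T') : Prop :=
  X v \/ v = root T' \/
  exists c1 c2, [/\ c1 <> c2, parent T' c1 = Some v, parent T' c2 = Some v,
    (exists l, X l /\ anc_le l c1) & (exists l, X l /\ anc_le l c2)].

Definition leaf_image (G G' : rtree) (iota : node G -> node G') (w : node G') : Prop :=
  exists v, is_leaf v /\ iota v = w.

(* G' is an extension of G via the embedding iota: G is obtained from G' by
   pruning the subtrees containing no leaf of iota(L(G)) and suppressing the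
   resulting degree-2 nodes, i.e. iota is an ancestor-order isomorphism from G
   onto the retained nodes of G' for the leaf set iota(L(G)) ⊆ L(G'). *)
Definition is_extension (G G' : rtree) (iota : node G -> node G') : Prop :=
  [/\ injective iota,
      (forall v, is_leaf v -> is_leaf (iota v)),
      (forall w, kept (leaf_image iota) w <-> exists v, iota v = w) &
      (forall a b, anc_le a b <-> anc_le (iota a) (iota b))].

Definition cond_D (G' S : rtree) (rho : node G' -> node S) (x : node G') : Prop :=
  rho x = rho (left_child x) /\ rho x = rho (right_child x).

Definition cond_S (G' S : rtree) (rho : node G' -> node S) (x : node G') : Prop :=
  perm_eq (children (rho x)) [:: rho (left_child x); rho (right_child x)].

Definition consistent (G' S : rtree) (rho : node G' -> node S) : Prop :=
  rho (root G') = root S /\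
  forall x, has_two_children x -> cond_D rho x \/ cond_S rho x.

Definition is_dup (G' S : rtree) (rho : node G' -> node S) (x : node G') : Prop :=
  has_two_children x /\ cond_D rho x.

Definition is_loss (G G' : rtree) (iota : node G -> node G') (w : node G') : Prop :=
  is_leaf w /\ ~ leaf_image iota w.

Definition is_reconciliation (G G' S : rtree) (phi : node G -> node S)
    (rho : node G' -> node S) (delta : node G' -> option (node G')) : Prop :=
  [/\ is_rbtree G, is_rbtree G', is_rbtree S,
      (forall v, is_leaf v -> is_leaf (phi v)) &
      exists iota : node G -> node G',
      [/\ is_extension iota,
          consistent rho,
          (forall v, is_leaf v -> rho (iota v) = phi v),
          (forall x l, delta x = Some l ->
              [/\ is_dup rho x, is_loss iota l & rho x = rho l]) &
          (forall x1 x2 l, delta x1 = Some l -> delta x2 = Some l -> x1 = x2)]].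

(* Main.v *)
Require Import Defs.
From mathcomp Require Import all_boot zify.
Set Implicit Arguments. Unset Strict Implicit. Unset Printing Implicit Defensive.

Definition stp (T : rtree) (o : option (node T)) := obind (parent T) o.

Lemma iter_none (T : rtree) n : iter n (@stp T) None = None.
Proof. by elim: n => //= n ->. Qed.

Lemma root_reach (T : rtree) (hr : parent T (Defs.root T) = None) n b :
  iter n (@stp T) (Some (Defs.root T)) = Some b -> b = Defs.root T.
Proof. by case: n => [[]//|n]; rewrite iterSr /= hr iter_none. Qed.

Lemma uniq_root (T : rtree) (hr : parent T (Defs.root T) = None) x n m :
  iter n (@stp T) (Some x) = Some (Defs.root T) ->
  iter m (@stp T) (Some x) = Some (Defs.root T) -> n = m.
Proof.
wlog: n m / n <= m => [H h1 h2|].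
  by case: (leqP n m) => [/H|/ltnW/H]; [apply|move=> H'; symmetry; apply: H'].
move=> le h1 h2; apply/eqP; rewrite eqn_leq le /=; apply/negP => lt.
move: h2; rewrite -(subnK le) iterD h1.
case e: (m - n) => [|k]; first by move: lt; rewrite -subn_eq0 e.
by rewrite iterSr /= hr iter_none.
Qed.

Lemma ex_root (T : rtree) (hall : forall x, anc_le x (Defs.root T)) x :
  exists n, iter n (@stp T) (Some x) == Some (Defs.root T).
Proof. by case: (hall x) => n h; exists n; apply/eqP. Qed.

Definition depth (T : rtree) (hall : forall x, anc_le x (Defs.root T)) x :=
  ex_minn (ex_root hall x).

Lemma depthP (T : rtree) hall x :
  iter (@depth T hall x) (@stp T) (Some x) = Some (Defs.root T).
Proof. by rewrite /depth; case: ex_minnP => n /eqP. Qed.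

Lemma depth_parent (T : rtree) (hr : parent T (Defs.root T) = None) hall z p :
  parent T z = Some p -> @depth T hall z = (depth hall p).+1.
Proof.
move=> e; apply: (uniq_root hr (depthP hall z)).
by rewrite iterSr /stp /= e; apply: depthP.
Qed.

Lemma depth_anc (T : rtree) (hr : parent T (Defs.root T) = None) hall n a b :
  iter n (@stp T) (Some a) = Some b -> @depth T hall a = depth hall b + n.
Proof.
elim: n a => [a [->]|n IH a]; first by rewrite addn0.
rewrite iterSr /stp /=; case e: (parent T a) => [p|]; last by rewrite iter_none.
move=> /IH h; by rewrite (depth_parent hr hall e) h addnS.
Qed.

Lemma no_cycle (T : rtree) (hr : parent T (Defs.root T) = None)
  (hall : forall x, anc_le x (Defs.root T)) a b :
  anc_le a b -> parent T b = Some a -> False.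
Proof.
case=> n /(depth_anc hr hall) h1 /(depth_parent hr hall) h2.
rewrite h2 in h1; by move: (leq_addr n (depth hall a).+1); rewrite -h1 ltnn.
Qed.

Lemma anc_trans (T : rtree) (a b c : node T) : anc_le a b -> anc_le b c -> anc_le a c.
Proof. by case=> n h1 [m h2]; exists (m + n); rewrite iterD; move: h1 h2; rewrite /stp => ->. Qed.

Lemma mem_children (T : rtree) (z p : node T) : (z \in children p) = (parent T z == Some p).
Proof. by rewrite mem_filter mem_enum andbT. Qed.

Lemma exists_leaf (T : rtree) (hr : parent T (Defs.root T) = None)
  (hall : forall x, anc_le x (Defs.root T)) : exists z : node T, is_leaf z.
Proof.
have [z _ hz] := @arg_maxnP (node T) (Defs.root T) predT (depth hall) isT.
exists z; rewrite /is_leaf; case e: (children z) => [|c s] //.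
have : c \in children z by rewrite e inE eqxx.
rewrite mem_children => /eqP /(depth_parent hr hall) h.
by have := hz c isT; rewrite h; lia.
Qed.

Lemma two_children (T : rtree) (p : node T) :
  size (children p) = 2 -> exists a b, children p = [:: a; b] /\
   left_child p = a /\ right_child p = b.
Proof.
rewrite /left_child /right_child; case: (children p) => [|a [|b [|c s]]] //= _.
by exists a, b.
Qed.

Lemma edge (G' S : rtree) (rho : node G' -> node S) (hG' : is_rbtree G')
  (hcons : consistent rho) z p :
  parent G' z = Some p -> p <> Defs.root G' ->
  has_two_children p /\
  ((cond_D rho p /\ rho z = rho p) \/ (cond_S rho p /\ parent S (rho z) = Some (rho p))).
Proof.
move=> e hp; case: hG' => _ _ _ /(_ p hp) hsz.
have zin : z \in children p by rewrite mem_children e.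
have h2 : has_two_children p.
  by case: hsz => // h0; move: zin; case: (children p) h0.
split=> //; have [a [b [ec [el er]]]] := two_children h2.
have : z \in [:: a; b] by rewrite -ec.
case: hcons => _ /(_ p h2) [[hl hr]|hS] zab; [left|right]; split => //.
  by move: zab; rewrite !inE => /orP [] /eqP ->; [rewrite -el hl | rewrite -er hr].
have : rho z \in children (rho p).
  rewrite (perm_mem hS) el er !inE.
  by move: zab; rewrite !inE => /orP [] /eqP ->; rewrite eqxx ?orbT.
by rewrite mem_children => /eqP.
Qed.

Lemma anc_refl (T : rtree) (a : node T) : anc_le a a.
Proof. by exists 0. Qed.

Lemma path_mono (G' S : rtree) (rho : node G' -> node S) (hG' : is_rbtree G')
  (hcons : consistent rho) n a b :
  iter n (@stp G') (Some a) = Some b -> b <> Defs.root G' -> anc_le (rho a) (rho b).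
Proof.
have hr : parent G' (Defs.root G') = None by case: hG'.
elim: n a => [a [->] _|n IH a]; first exact: anc_refl.
rewrite iterSr /stp /=; case e: (parent G' a) => [p|]; last by rewrite iter_none.
move=> hp hb; have pnr : p <> Defs.root G'.
  by move=> ep; apply: hb; move: hp; rewrite ep; apply: root_reach.
apply: anc_trans (IH _ hp hb).
have [_ [[_ ->]|[_ hpS]]] := edge hG' hcons e pnr; first exact: anc_refl.
by exists 1; rewrite /= hpS.
Qed.

Lemma down_root (G' S : rtree) (rho : node G' -> node S) (hG' : is_rbtree G')
  (hS : is_rbtree S) (hcons : consistent rho) n a c :
  iter n (@stp G') (Some a) = Some c -> c <> Defs.root G' ->
  rho c = Defs.root S -> rho a = Defs.root S.
Proof.
have hr : parent G' (Defs.root G') = None by case: hG'.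
elim: n a => [a [->] //|n IH a].
rewrite iterSr /stp /=; case e: (parent G' a) => [p|]; last by rewrite iter_none.
move=> hp hc hrc; have pnr : p <> Defs.root G'.
  by move=> ep; apply: hc; move: hp; rewrite ep; apply: root_reach.
have hpr := IH _ hp hc hrc.
have [_ [[_ ->]//|[hSp _]]] := edge hG' hcons e pnr.
move: (perm_size hSp); rewrite hpr /=; by case: hS => _ _ ->.
Qed.

Theorem lemma4 (G G' S : rtree) (phi : node G -> node S)
    (rho : node G' -> node S) (delta : node G' -> option (node G'))
    (x y : node G') :
  is_reconciliation phi rho delta ->
  anc_lt x y -> rho x = rho y ->
  is_dup rho y.
Proof.
case=> hG hG' hS hphi [iota [hext hcons hleaf _ _]].
have hrG' : parent G' (Defs.root G') = None by case: hG'.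
have hrS : parent S (Defs.root S) = None by case: hS.
have hallS : forall x, anc_le x (Defs.root S) by case: hS.
have hallG' : forall x, anc_le x (Defs.root G') by case: hG'.
case=> [[n hn] hne] hxy.
case: n hn => [[]//|m]; rewrite iterS.
case e: (iter m _ (Some x)) => [y'|] //= ey.
have y'nr : y' <> Defs.root G' by move=> ey'; move: ey; rewrite ey' hrG'.
have hxy' := path_mono hG' hcons e y'nr.
case: (eqVneq y (Defs.root G')) => [yr|ynr].
  have rx : rho x = Defs.root S by rewrite hxy yr; case: hcons.
  have ry' : rho y' = Defs.root S.
    by case: hxy' => k; rewrite rx; apply: root_reach.
  have [v hv] : exists v : node G, is_leaf v by case: hG => hr hall _ _; apply: exists_leaf hr hall.
  case: hext => _ hlv _ _.
  have hl := hlv v hv.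
  case: (hallG' (iota v)) => k hk.
  case: k hk => [[]|j].
    move=> el; move: hl; rewrite /is_leaf el; case: hG' => _ _ h _.
    by move=> h'; move: h; rewrite h'.
  rewrite iterS; case ew: (iter j _ (Some (iota v))) => [w|] //= ewr.
  have wy' : w = y'.
    have : w \in children (Defs.root G') by rewrite mem_children ewr.
    have : y' \in children (Defs.root G') by rewrite mem_children ey yr.
    case: hG' => _ _ + _; case: (children (Defs.root G')) => [|a [|b s]] //= _.
    by rewrite !inE => /eqP -> /eqP ->.
  rewrite wy' in ew.
  have := down_root hG' hS hcons ew y'nr ry'.
  rewrite hleaf // => hpv.
  move: (hphi v hv); rewrite /is_leaf hpv; case: hS => _ _ h _.
  by move=> h'; move: h; rewrite h'.
have [h2 [[hD _]|[_ hpS]]] := edge hG' hcons ey (elimN eqP ynr); first by split.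
exfalso; apply: (no_cycle hrS hallS _ hpS).
by rewrite -hxy.
Qed.
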